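(* Let $k>0$, $\sigma>0$, $\eta>0$ and $\beta\in(0,1)$ be real numbers, and let \[ A:=\begin{pmatrix} 1+\sigma\eta& 0& 0\\ -k& 1& 0\\ 0& -1& 1\end{pmatrix}^{-1}\begin{pmatrix} \sigma\eta& \eta& 1\\ 0& \beta& 0\\ 0& 0& 1\end{pmatrix}. \] Then: (i) One has \[ A=\begin{pmatrix} \frac{\sigma\eta}{1+\sigma\eta}& \frac{\eta}{1+\sigma\eta} & \frac{1}{1+\sigma\eta}\\ \frac{k\sigma\eta}{1+\sigma\eta}& \frac{k\eta}{1+\sigma\eta}+\beta& \frac{k}{1+\sigma\eta}\\ \frac{k\sigma\eta}{1+\sigma\eta}& \frac{k\eta}{1+\sigma\eta}+\beta& \frac{k}{1+\sigma\eta}+1\end{pmatrix}. \] (ii) The eigenvalues of $A$ are exactly the roots of $P(x)=x^3-bx^2+cx-d$, where \[ b=\frac{\sigma\eta+k(1+\eta)}{1+\sigma\eta}+1+\beta,\quad c=(1+\beta)\frac{\sigma\eta}{1+\sigma\eta}+\frac{k\eta}{1+\sigma\eta}+\beta,\quad d=\frac{\beta\sigma\eta}{1+\sigma\eta}. \] (iii) The model is unconditionally determined: for every $(k,\sigma,\eta,\beta)$ with $k>0$, $\sigma>0$, $\eta>0$, $0<\beta<1$, the matrix $A$ has two eigenvalues inside the unit disk and the remaining one outside the unit disk.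
   Context: The unit disk means the open set $\{z\in\mathbb{C}:\ |z|<1\}$. The parameter space is $S=\{(k,\sigma,\eta,\beta)\in\mathbb{R}^4:\ k>0,\sigma>0,\eta>0,0<\beta<1\}$; ''unconditionally determined'' means the determinacy property (two eigenvalues of $A$ inside the unit disk, one outside) holds for every point of $S$. *)

(* Defs.v *)
(* real closed field R (covers the reals), complex R = R[i]. *)
From HB Require Import structures.
From mathcomp Require Import all_boot all_order all_algebra.
From mathcomp Require Import complex.
Set Implicit Arguments. Unset Strict Implicit. Unset Printing Implicit Defensive.
Import Order.TTheory GRing.Theory Num.Theory.
Local Open Scope ring_scope.

Definition mx3 (R : rcfType) (L : seq (seq R)) : 'M[R]_3 :=
  \matrix_(i < 3, j < 3) nth 0 (nth [::] L i) j.

Section Model.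
Variable R : rcfType.
Variables (k sigma eta beta : R).

Definition Mleft : 'M[R]_3 :=
  mx3
    [:: [:: 1 + sigma * eta; 0; 0];
        [:: - k; 1; 0];
        [:: 0; -1; 1]].

Definition Mright : 'M[R]_3 :=
  mx3
    [:: [:: sigma * eta; eta; 1];
        [:: 0; beta; 0];
        [:: 0; 0; 1]].

Definition Amat : 'M[R]_3 := invmx Mleft *m Mright.

Definition Aexplicit : 'M[R]_3 :=
  let s := 1 + sigma * eta in
  mx3
    [:: [:: sigma * eta / s; eta / s; 1 / s];
        [:: k * sigma * eta / s; k * eta / s + beta; k / s];
        [:: k * sigma * eta / s; k * eta / s + beta; k / s + 1]].

Definition bcoef : R := (sigma * eta + k * (1 + eta)) / (1 + sigma * eta) + 1 + beta.
Definition ccoef : R :=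
  (1 + beta) * (sigma * eta / (1 + sigma * eta)) + k * eta / (1 + sigma * eta) + beta.
Definition dcoef : R := beta * sigma * eta / (1 + sigma * eta).

Definition Ppoly : {poly R} :=
  'X^3 - bcoef *: 'X^2 + ccoef *: 'X - dcoef%:P.

(* A viewed as a complex matrix (eigenvalues may be complex) *)
Definition AmatC : 'M[R[i]]_3 := map_mx (real_complex R) Amat.
End Model.

(* Main.v *)
Require Import Defs.
From HB Require Import structures.
From mathcomp Require Import all_boot all_order all_algebra.
From mathcomp Require Import complex ring lra.
Set Implicit Arguments. Unset Strict Implicit.
Import Order.TTheory GRing.Theory Num.Theory.
Local Open Scope ring_scope.

Definition m3 (T : Type) (z : T) (L : seq (seq T)) : 'M[T]_3 :=
  \matrix_(i < 3, j < 3) nth z (nth [::] L i) j.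

Lemma det3 (T : comNzRingType) (a b c d e f g h i : T) :
  \det (m3 0 [:: [:: a; b; c]; [:: d; e; f]; [:: g; h; i]]) =
  a * (e * i - f * h) - b * (d * i - f * g) + c * (d * h - e * g).
Proof.
rewrite (expand_det_row _ ord0) !big_ord_recr big_ord0 /=.
rewrite /cofactor !(expand_det_row _ ord0) !big_ord_recr big_ord0 /=.
rewrite /cofactor !det_mx11 !mxE /= !big_ord0 /=.
rewrite !expr0 !expr1 ?expr2; ring.

Qed.

Lemma cp3 (T : comNzRingType) (a b c d e f g h i : T) :
  char_poly (m3 0 [:: [:: a; b; c]; [:: d; e; f]; [:: g; h; i]]) =
  'X^3 - (a + e + i)%:P * 'X^2 + (a*e - b*d + a * i - c*g + e * i - f*h)%:P * 'X
  - (a * (e * i - f * h) - b * (d * i - f * g) + c * (d * h - e * g))%:P.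
Proof.
rewrite /char_poly.
have -> : char_poly_mx (m3 0 [:: [:: a; b; c]; [:: d; e; f]; [:: g; h; i]]) =
  m3 0 [:: [:: 'X - a%:P; - b%:P; - c%:P]; [:: - d%:P; 'X - e%:P; - f%:P];
           [:: - g%:P; - h%:P; 'X - i%:P]].
  apply/matrixP=> p q; rewrite !mxE.
  case: p => [[|[|[|p]]] Hp] //; case: q => [[|[|[|q]]] Hq] //=;
  by rewrite ?mulr1n ?mulr0n ?sub0r.
rewrite det3 !(polyCB, polyCM, polyCD, polyCN).
ring.
Qed.

Lemma mx3E (R : rcfType) (L : seq (seq R)) : mx3 L = m3 0 L.
Proof. by []. Qed.

Lemma normc_lt1 (R : rcfType) (z : R[i]) :
  complex.Re z ^+ 2 + complex.Im z ^+ 2 < 1 -> `|z| < 1.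
Proof.
move=> h; rewrite normc_def ltcE /= eqxx /=.
by rewrite -sqrtr1 ltr_sqrt.
Qed.

Lemma normc_gt1 (R : rcfType) (r : R) : 1 < r -> 1 < `|real_complex R r|.
Proof.
move=> h; rewrite normc_def ltcE /= eqxx /=.
rewrite expr0n /= addr0 sqrtr_sqr ger0_norm //.
by apply: ltW; apply: lt_trans h; apply: ltr01.
Qed.

Lemma quad_small (R : rcfType) (p q : R) (z : R[i]) :
  0 < q -> q < 1 -> 0 < 1 + p + q -> 0 < 1 - p + q ->
  z ^+ 2 + real_complex R p * z + real_complex R q = 0 -> `|z| < 1.
Proof.
move=> q0 q1 h1 h2; case: z => a b /= E.
apply: normc_lt1 => /=.
move/eqP: E; rewrite eq_complex /= => /andP [/eqP E1 /eqP E2].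
have [b0|bn0] := eqVneq b 0.
  subst b.
  have ha1 : a < 1.
    rewrite ltNge; apply/negP => ha.
    have a0 : 0 < a by apply: lt_le_trans ha; apply: ltr01.
    have H1 : 0 < a * (1 + p + q) := mulr_gt0 a0 h1.
    have H2 : 0 <= (a - 1) * (a - q) by apply: mulr_ge0; lra.
    nra.
  have ha2 : -1 < a.
    rewrite ltNge; apply/negP => ha.
    have a0 : 0 < - a by nra.
    have H1 : 0 < (- a) * (1 - p + q) := mulr_gt0 a0 h2.
    have H2 : 0 <= (- a - 1) * (- a - q) by apply: mulr_ge0; lra.
    nra.
  nra.
have E3 : 2 * a + p = 0.
  apply/eqP; rewrite -(mulIr_eq0 _ (mulIf bn0)) ?mul0r.
  by apply/eqP; rewrite -E2; ring.
nra.
Qed.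

Theorem theorem4p2 (R : rcfType) (k sigma eta beta : R) :
  0 < k -> 0 < sigma -> 0 < eta -> 0 < beta -> beta < 1 ->
  (* (i) explicit form of A *)
  Amat k sigma eta beta = Aexplicit k sigma eta beta /\
  (* (ii) the (complex) eigenvalues of A are exactly the roots of P *)
  (forall z : R[i],
      eigenvalue (AmatC k sigma eta beta) z <->
      root (map_poly (real_complex R) (Ppoly k sigma eta beta)) z) /\
  (* (iii) counted with multiplicity: two eigenvalues in the open unit disk,
     one outside the closed unit disk *)
  (exists z1 z2 z3 : R[i],
      char_poly (AmatC k sigma eta beta) = ('X - z1%:P) * ('X - z2%:P) * ('X - z3%:P) /\
      `|z1| < 1 /\ `|z2| < 1 /\ 1 < `|z3|).
Proof.
move=> hk hs he hb hb1.
set s := 1 + sigma * eta.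
have s0 : 0 < s by rewrite /s; nra.
have sn0 : s != 0 by rewrite gt_eqF.
have HA : Amat k sigma eta beta = Aexplicit k sigma eta beta.
  have Lu : Mleft k sigma eta \in unitmx.
    rewrite unitmxE unitfE.
    rewrite /Mleft /mx3.
    change (\det (m3 0 [:: [:: 1 + sigma * eta; 0; 0]; [:: - k; 1; 0]; [:: 0; -1; 1]]) != 0).
    rewrite det3; apply/eqP => h; move: sn0; rewrite /s -h => /eqP; apply; ring.
  rewrite /Amat.
  have -> : Mright sigma eta beta = Mleft k sigma eta *m Aexplicit k sigma eta beta.
    apply/matrixP=> p q; rewrite !mxE !big_ord_recr big_ord0 /= !mxE.
    case: p => [[|[|[|p]]] Hp] //; case: q => [[|[|[|q]]] Hq] //=; rewrite -/s; field; exact: sn0.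
  by rewrite mulKmx.
have HP : char_poly (Amat k sigma eta beta) = Ppoly k sigma eta beta.
  rewrite HA /Aexplicit mx3E cp3 /Ppoly -!mul_polyC -/s.
  congr (_ - _ * _ + _ * _ - _); congr (_ %:P);
    rewrite /bcoef /ccoef /dcoef -/s; field; exact: sn0.
have Hii : forall z : R[i],
      eigenvalue (AmatC k sigma eta beta) z <->
      root (map_poly (real_complex R) (Ppoly k sigma eta beta)) z.
  by move=> z; rewrite eigenvalue_root_char /AmatC -map_char_poly HP.
split; first exact: HA.
split; first exact: Hii.
set b := bcoef k sigma eta beta.
set c := ccoef k sigma eta beta.
set d := dcoef sigma eta beta.
have u0 : 0 < sigma * eta / s by apply: divr_gt0 => //; apply: mulr_gt0.
have v0 : 0 < k * eta / s by apply: divr_gt0 => //; apply: mulr_gt0.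
have w0 : 0 < k / s by apply: divr_gt0.
have b0 : 0 < b.
  have -> : b = sigma * eta / s + k * eta / s + k / s + 1 + beta.
    by rewrite /b /bcoef -/s; field; exact: sn0.
  lra.
have c0 : 0 < c.
  rewrite /c /ccoef -/s.
  have : 0 < (1 + beta) * (sigma * eta / s) by apply: mulr_gt0; lra.
  lra.
have d0 : 0 < d.
  rewrite /d /dcoef -/s; apply: divr_gt0 => //; apply: mulr_gt0 => //; exact: mulr_gt0.
have d1 : d < 1.
  rewrite /d /dcoef -/s ltr_pdivrMr // mul1r /s.
  have : 0 < (1 - beta) * (sigma * eta) by apply: mulr_gt0; [lra | exact: mulr_gt0].
  move=> H.
  have : beta * sigma * eta < 1 + sigma * eta by clear -H; nra.
  done.
have Hev x : (Ppoly k sigma eta beta).[x] = x ^+ 3 - b * x ^+ 2 + c * x - d.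
  by rewrite /Ppoly !hornerE.
have P1 : (Ppoly k sigma eta beta).[1] = - (k / s).
  rewrite Hev /b /c /d /bcoef /ccoef /dcoef -/s; field; exact: sn0.
have [X HX] : exists X, X = 1 + b + d by eexists.
have X1 : 1 <= X by rewrite HX; lra.
have PX : 0 <= (Ppoly k sigma eta beta).[X].
  rewrite Hev.
  have H1 : 0 <= (X - 1) * (X + 1) by apply: mulr_ge0; lra.
  have H1' : 1 <= X ^+ 2 by nra.
  have H2 : 0 <= (X ^+ 2 - 1) * (1 + d) by apply: mulr_ge0; lra.
  have H3 : 0 <= c * X by apply: mulr_ge0; lra.
  have H4 : X ^+ 3 - b * X ^+ 2 = X ^+ 2 * (1 + d) by rewrite HX; ring.
  nra.
have [r /andP [r1 rX] /rootP Pr] : exists2 r, 1 <= r <= X & root (Ppoly k sigma eta beta) r.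
  apply: poly_ivt => //.
  rewrite PX andbT P1 oppr_le0; exact: ltW.
have r1' : 1 < r.
  rewrite lt_neqAle r1 andbT; apply/eqP => e; move: Pr; rewrite -e P1.
  by move/eqP; rewrite oppr_eq0 gt_eqF.
have r0 : 0 < r by apply: lt_trans r1'; apply: ltr01.
have rn0 : r != 0 by rewrite gt_eqF.
have [p Hp] : exists p, p = r - b by eexists.
have [q Hq] : exists q, q = d / r by eexists.
have Hb : b = r - p by rewrite Hp; ring.
have Hd : d = r * q by rewrite Hq; field.
have Hc : c = q - r * p.
  apply: (mulIf rn0); move: Pr; rewrite Hev Hb Hd => E.
  apply/eqP; rewrite -subr_eq0; apply/eqP; rewrite -E; ring.
have FP : Ppoly k sigma eta beta = ('X - r%:P) * ('X^2 + p%:P * 'X + q%:P).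
  rewrite /Ppoly -!mul_polyC -/b -/c -/d Hb Hc Hd !(polyCB, polyCM); ring.
have Q1 : 0 < 1 + p + q.
  have : (Ppoly k sigma eta beta).[1] = (1 - r) * (1 + p + q).
    by rewrite Hev Hb Hc Hd; ring.
  rewrite P1 => E.
  have : 0 < (r - 1) * (1 + p + q).
    have -> : (r - 1) * (1 + p + q) = k / s by rewrite -[k / s]opprK E; ring.
    exact: w0.
  by rewrite pmulr_rgt0 // subr_gt0.
have Q2 : 0 < 1 - p + q.
  have E : (Ppoly k sigma eta beta).[-1] = - ((1 + r) * (1 - p + q)).
    by rewrite Hev Hb Hc Hd; ring.
  have : (Ppoly k sigma eta beta).[-1] < 0.
    rewrite Hev.
    have -> : (-1) ^+ 3 - b * (-1) ^+ 2 + c * -1 - d = - 1 - b - c - d by ring.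
    lra.
  rewrite E oppr_lt0 pmulr_rgt0 //; lra.
have q0 : 0 < q by rewrite Hq divr_gt0.
have q1 : q < 1.
  rewrite Hq ltr_pdivrMr // mul1r; apply: lt_trans d1 _; exact: r1'.
have CP : char_poly (AmatC k sigma eta beta) =
    map_poly (real_complex R) (Ppoly k sigma eta beta).
  by rewrite /AmatC -map_char_poly HP.
set P' := real_complex R p.
set Q' := real_complex R q.
have [w Hwd] : exists w, w = sqrtc (P' ^+ 2 - 4 * Q') by eexists.
have [z1 Hz1d] : exists z1, z1 = (- P' + w) / 2 by eexists.
have Hw : w ^+ 2 = P' ^+ 2 - 4 * Q' by rewrite Hwd sqr_sqrtc.
have Hz1 : z1 ^+ 2 + P' * z1 + Q' = 0.
  have -> : z1 ^+ 2 + P' * z1 + Q' = (w ^+ 2 - (P' ^+ 2 - 4 * Q')) / 4.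
    by rewrite Hz1d; field.
  by rewrite Hw subrr mul0r.
have [z2 Hz2d] : exists z2, z2 = - P' - z1 by eexists.
have Hz2 : z2 ^+ 2 + P' * z2 + Q' = 0 by rewrite -Hz1 Hz2d; ring.
have HQ : Q' = z1 * z2.
  have -> : z1 * z2 = Q' - (z1 ^+ 2 + P' * z1 + Q') by rewrite Hz2d; ring.
  by rewrite Hz1 subr0.
have HP' : P' = - (z1 + z2) by rewrite Hz2d; ring.
exists z1, z2, (real_complex R r); split.
  rewrite CP FP !(rmorphM, rmorphB, rmorphD, rmorphXn).
  rewrite /= !(map_polyX (real_complex R)) !(map_polyC (real_complex R)) /= -/P' -/Q'.
  rewrite HQ HP' !(polyCM, polyCN, polyCD); ring.
split; first exact: quad_small q0 q1 Q1 Q2 Hz1.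
split; first exact: quad_small q0 q1 Q1 Q2 Hz2.
exact: normc_gt1.
Qed.
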